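(* Let $(G,\precsim)$ be a compatible quasi-ordered abelian group and let $H$ be a subgroup of $G$ which is convex with respect to $\precsim$. Then either $H\subseteq G^o$ or $G^o\subseteq H$; and if $G^o\subseteq H$, then $H$ is an initial segment of $G$.
   Context: A compatible quasi-ordered abelian group is an abelian group $G$ with a total quasi-order $\precsim$ (reflexive, transitive, any two elements comparable) such that, writing $a\sim b$ for $a\precsim b\wedge b\precsim a$: $(Q_1)$ $x\sim0\Rightarrow x=0$; $(Q_2)$ $x\precsim y\wedge y\not\sim z\Rightarrow x+z\precsim y+z$, for all $x,y,z$. With $cl(g)$ the $\sim$-class of $g$, $g$ is o-type if $cl(g)=\{g\}$ and $g$ is not of order $2$; $G^o$ is the set of o-type elements. $S$ is convex if $s,t\in S$, $s\precsim a\precsim t$ imply $a\in S$; $S$ is an initial segment if $s\in S$, $a\precsim s$ imply $a\in S$. *)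

(* Defs.v *)
From mathcomp Require Import all_boot all_algebra.
Set Implicit Arguments. Unset Strict Implicit. Unset Printing Implicit Defensive.
Import GRing.Theory.
Local Open Scope ring_scope.

Section QO.
Variable G : zmodType.
Variable le : G -> G -> Prop.

Definition qo_equiv (a b : G) : Prop := le a b /\ le b a.

Definition compatible_qo : Prop :=
  [/\ (forall x, le x x),
      (forall x y z, le x y -> le y z -> le x z),
      (forall x y, le x y \/ le y x),
      (forall x, qo_equiv x 0 -> x = 0)
    & (forall x y z, le x y -> ~ qo_equiv y z -> le (x + z) (y + z))].

Definition order2 (g : G) : Prop := g <> 0 /\ g + g = 0.

Definition o_type (g : G) : Prop :=
  (forall h, qo_equiv h g <-> h = g) /\ ~ order2 g.

Definition is_subgroup (H : G -> Prop) : Prop :=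
  H 0 /\ (forall x y, H x -> H y -> H (x - y)).

Definition qo_convex (S : G -> Prop) : Prop :=
  forall s t a, S s -> S t -> le s a -> le a t -> S a.

Definition initial_segment (S : G -> Prop) : Prop :=
  forall s a, S s -> le a s -> S a.
End QO.

(* Main.v *)
Require Import Defs.
From mathcomp Require Import all_boot all_algebra.
From Stdlib Require Import Classical.
Import GRing.Theory.
Local Open Scope ring_scope.
Set Implicit Arguments.

Section Aux.
Variable G : zmodType.
Variable le : G -> G -> Prop.
Hypothesis hc : compatible_qo le.

Let refl : forall x, le x x. Proof. by case: hc. Qed.
Let trans : forall x y z, le x y -> le y z -> le x z. Proof. by case: hc. Qed.
Let tot : forall x y, le x y \/ le y x. Proof. by case: hc. Qed.
Let q1 : forall x, qo_equiv le x 0 -> x = 0. Proof. by case: hc. Qed.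
Let q2 : forall x y z, le x y -> ~ qo_equiv le y z -> le (x + z) (y + z).
Proof. by case: hc. Qed.

Lemma zero_o : o_type le 0.
Proof.
split; last by case.
move=> h; split; first exact: q1.
by move=> ->; split; apply: refl.
Qed.

Lemma lemM h : ~ o_type le h -> qo_equiv le h (- h).
Proof.
move=> no; apply: NNPP => nh; apply: no; split.
  move=> b; split; last by move=> ->; split; apply: refl.
  move=> [bh hb]; apply: NNPP => nbh.
  have nb : ~ qo_equiv le b (- h).
    by move=> [b1 b2]; apply: nh; split; [apply: trans hb b1 | apply: trans b2 bh].
  have e1 := q2 bh nh; rewrite subrr in e1.
  have e2 := q2 hb nb; rewrite subrr in e2.
  have : b - h = 0 by apply: q1; split.
  by move/eqP; rewrite subr_eq0 => /eqP.
move=> [h0 hh]; apply: nh.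
have -> : - h = h by apply/eqP; rewrite eq_sym -addr_eq0 hh.
by split; apply: refl.
Qed.

Lemma lemL a : ~ le 0 a -> le 0 (- a) /\ o_type le a.
Proof.
move=> na.
have n0 : ~ qo_equiv le 0 (- a).
  move=> [e1 e2]; apply: na.
  have : - a = 0 by apply: q1.
  by move/eqP; rewrite oppr_eq0 => /eqP ->; apply: refl.
have la0 : le a 0 by case: (tot 0 a).
have := q2 la0 n0; rewrite subrr add0r => h1; split => //.
apply: NNPP => no; have [_ e] := lemM no; apply: na; exact: trans h1 e.
Qed.

Lemma lemK h k : ~ o_type le h -> o_type le k -> le 0 k -> le k h.
Proof.
move=> nh ok k0; apply: NNPP => nkh.
have [hm1 hm2] := lemM nh.
have h0 : le 0 h.
  by apply: NNPP => n; apply: nh; have [_ ] := lemL n.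
have hk : le h k by case: (tot k h).
have s1 : le 0 (- h) := trans h0 hm1.
have n1 : ~ qo_equiv le (- h) k.
  by move=> [_ e]; apply: nkh; exact: trans e hm2.
have e1 := q2 s1 n1; rewrite add0r in e1.
have n2 : ~ qo_equiv le (- h + k) h.
  by move=> [e _]; apply: nkh; exact: trans e1 e.
have e2 := q2 e1 n2.
have eq : - h + k + h = k by rewrite addrAC addNr add0r.
rewrite eq in e2.
have n3 : ~ qo_equiv le h k by move=> [_ e]; exact: nkh.
have e3 := q2 h0 n3; rewrite add0r in e3.
have : k + h = k by apply: (proj1 (proj1 ok (k + h))); split; [exact: e2 | rewrite addrC].
move/eqP; rewrite -subr_eq0 addrAC subrr add0r => /eqP hz.
by apply: nh; rewrite hz; apply: zero_o.
Qed.
End Aux.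

Theorem mainTheorem8 (G : zmodType) (le : G -> G -> Prop) (H : G -> Prop) :
  compatible_qo le -> is_subgroup H -> qo_convex le H ->
  ((forall g, H g -> o_type le g) \/ (forall g, o_type le g -> H g)) /\
  ((forall g, o_type le g -> H g) -> initial_segment le H).
Proof.
move=> hc [H0 Hs] cv; split.
  case: (classic (forall g, H g -> o_type le g)) => [|nall]; first by left.
  right => g og.
  have [h [Hh nh]] : exists h, H h /\ ~ o_type le h.
    apply: NNPP => ne; apply: nall => g' Hg'; apply: NNPP => n; apply: ne.
    by exists g'.
  case: (classic (le 0 g)) => g0.
    exact: (cv 0 h g H0 Hh g0 (lemK hc nh og g0)).
  have [ng0 _] := lemL hc g g0.
  have ong : o_type le (- g).
    apply: NNPP => no; have [e _] := lemM hc no; apply: g0.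
    by move: e; rewrite opprK => e; case: hc => _ tr _ _ _; apply: tr ng0 e.
  have Hng := cv 0 h (- g) H0 Hh ng0 (lemK hc nh ong ng0).
  by have := Hs 0 (- g) H0 Hng; rewrite sub0r opprK.
move=> all s a Hs' las.
case: (classic (le 0 a)) => a0; first exact: (cv 0 s a H0 Hs' a0 las).
by apply: all; have [_ ] := lemL hc a a0.
Qed.
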